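(* Let $F$ be a field and consider seven lines $l_x,l_y,l_z,l_1,l_2,l_3,l_4$ in the plane $F^2$ such that for each $i\in\{1,2,3,4\}$ the line $l_i$ meets each of $l_x,l_y,l_z$ in exactly one point. For $i\in\{1,2,3,4\}$ let $x_i,y_i,z_i$ be the first coordinates (projections onto the $x$-axis) of the intersection points of $l_i$ with $l_x$, $l_y$, $l_z$ respectively. Then $$\det\begin{pmatrix} x_1-y_1 & x_1-z_1 & z_1(x_1-y_1) & y_1(x_1-z_1)\\ x_2-y_2 & x_2-z_2 & z_2(x_2-y_2) & y_2(x_2-z_2)\\ x_3-y_3 & x_3-z_3 & z_3(x_3-y_3) & y_3(x_3-z_3)\\ x_4-y_4 & x_4-z_4 & z_4(x_4-y_4) & y_4(x_4-z_4) \end{pmatrix}=0.$$ *)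

(* Defs.v *)
From mathcomp Require Import all_boot all_algebra.
Set Implicit Arguments. Unset Strict Implicit. Unset Printing Implicit Defensive.
Import GRing.Theory.
Local Open Scope ring_scope.

(* A line in the plane F^2, given by an equation a*x + b*y = c with (a,b) <> (0,0). *)
Record line (F : fieldType) := Line {
  la : F; lb : F; lc : F;
  line_nondeg : (la != 0) || (lb != 0) }.

Definition on_line (F : fieldType) (l : line F) (p : F * F) : Prop :=
  la l * p.1 + lb l * p.2 = lc l.

Definition meet_once (F : fieldType) (l m : line F) : Prop :=
  exists! p : F * F, on_line l p /\ on_line m p.

Definition prop5_matrix (F : fieldType) (x y z : 'I_4 -> F) : 'M[F]_4 :=
  \matrix_(i < 4, j < 4)
    [:: x i - y i; x i - z i; z i * (x i - y i); y i * (x i - z i)]`_j.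

(* Main.v *)
Require Import Defs.
From mathcomp Require Import all_boot all_algebra ring.
Import GRing.Theory.
Local Open Scope ring_scope.

Lemma det_rel (F : fieldType) (x y z : 'I_4 -> F) (a b c d : F) :
  [|| a != 0, b != 0, c != 0 | d != 0] ->
  (forall i, a*(x i - y i) + b*(x i - z i) + c*(z i*(x i - y i)) + d*(y i*(x i - z i)) = 0) ->
  \det (prop5_matrix x y z) = 0.
Proof.
move=> nz H; rewrite -det_tr; apply/eqP/det0P.
exists (\row_(j < 4) [:: a; b; c; d]`_j).
  apply/negP => /eqP/rowP E.
  move: nz; have:= E ord0; have:= E (inord 1); have:= E (inord 2); have:= E (inord 3).
  by rewrite !mxE !inordK //= => -> -> -> ->; rewrite eqxx.
apply/rowP => i; rewrite !mxE !big_ord_recr big_ord0 /= !mxE /=.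
rewrite -[RHS](H i); ring.
Qed.
Lemma collin (F : fieldType) (l : line F) (p q r : F * F) :
  on_line l p -> on_line l q -> on_line l r ->
  (q.1-p.1)*(r.2-p.2) - (r.1-p.1)*(q.2-p.2) = 0.
Proof.
rewrite /on_line => Hp Hq Hr.
set T := (_ - _).
have E1 : la l * T = ((la l * q.1 + lb l * q.2 - lc l) - (la l * p.1 + lb l * p.2 - lc l))*(r.2-p.2)
   - ((la l * r.1 + lb l * r.2 - lc l) - (la l * p.1 + lb l * p.2 - lc l))*(q.2-p.2) by rewrite /T; ring.
have E2 : lb l * T = (q.1-p.1)*((la l * r.1 + lb l * r.2 - lc l) - (la l * p.1 + lb l * p.2 - lc l))
   - (r.1-p.1)*((la l * q.1 + lb l * q.2 - lc l) - (la l * p.1 + lb l * p.2 - lc l)) by rewrite /T; ring.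
rewrite Hp Hq Hr subrr !mul0r !mulr0 subrr in E1 E2.
have := line_nondeg l; case/orP => nz.
  by move/eqP: E1; rewrite mulf_eq0 (negbTE nz) => /eqP.
by move/eqP: E2; rewrite mulf_eq0 (negbTE nz) => /eqP.
Qed.

Lemma vert (F : fieldType) (l : line F) p : lb l = 0 -> on_line l p -> p.1 = lc l / la l.
Proof.
move=> b0; rewrite /on_line b0 mul0r addr0 => <-.
have := line_nondeg l; rewrite b0 eqxx orbF => nz.
by field.
Qed.

Lemma nvert (F : fieldType) (l : line F) p : lb l != 0 -> on_line l p ->
  p.2 = (- la l / lb l) * p.1 + lc l / lb l.
Proof. by move=> nz <-; field. Qed.

Arguments vert {F l p}.
Arguments nvert {F l p}.
Arguments collin {F l p q r}.
Arguments det_rel {F x y z a b c d}.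

Theorem proposition5 (F : fieldType) (lx ly lz : line F) (l : 'I_4 -> line F)
    (px py pz : 'I_4 -> F * F)
    (hx : forall i, meet_once (l i) lx)
    (hy : forall i, meet_once (l i) ly)
    (hz : forall i, meet_once (l i) lz)
    (hpx : forall i, on_line (l i) (px i) /\ on_line lx (px i))
    (hpy : forall i, on_line (l i) (py i) /\ on_line ly (py i))
    (hpz : forall i, on_line (l i) (pz i) /\ on_line lz (pz i)) :
  \det (prop5_matrix (fun i => (px i).1) (fun i => (py i).1) (fun i => (pz i).1)) = 0.
Proof.
have [bx|bx] := eqVneq (lb lx) 0.
  apply: (@det_rel _ _ _ _ (- (lc lx / la lx)) (lc lx / la lx) 1 (-1)).
    by rewrite oner_neq0 !orbT.
  by move=> i; rewrite (vert bx (hpx i).2); ring.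
have [by0|by0] := eqVneq (lb ly) 0.
  apply: (@det_rel _ _ _ _ 0 (- (lc ly / la ly)) 0 1).
    by rewrite oner_neq0 !orbT.
  by move=> i; rewrite (vert by0 (hpy i).2); ring.
have [bz|bz] := eqVneq (lb lz) 0.
  apply: (@det_rel _ _ _ _ (- (lc lz / la lz)) 0 1 0).
    by rewrite oner_neq0 !orbT.
  by move=> i; rewrite (vert bz (hpz i).2); ring.
set ax := - la lx / lb lx; set ay := - la ly / lb ly; set az := - la lz / lb lz.
set cx := lc lx / lb lx; set cy := lc ly / lb ly; set cz := lc lz / lb lz.
have [nz|z] := boolP [|| cx - cz != 0, cy - cx != 0, ax - az != 0 | ay - ax != 0].
  apply: (det_rel nz) => i.
  have := collin (hpx i).1 (hpy i).1 (hpz i).1.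
  rewrite (nvert bx (hpx i).2) (nvert by0 (hpy i).2) (nvert bz (hpz i).2) -/ax -/ay -/az -/cx -/cy -/cz.
  move=> <-; ring.
apply: (@det_rel _ _ _ _ 1 0 0 0); first by rewrite oner_neq0.
move: z; rewrite !negb_or !negbK !subr_eq0 => /and4P[/eqP e1 /eqP e2 _ /eqP e4] i.
suff -> : px i = py i by ring.
have onx : on_line lx (py i).
  have := nvert by0 (hpy i).2; rewrite -/ay -/cy e4 e2 /ax /cx => h.
  by rewrite /on_line h; field.
case: (hx i) => p [_ U].
by rewrite -(U _ (hpx i)) -(U _ (conj (hpy i).1 onx)).
Qed.
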